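(* Let $0<\tau<1$, $q>0$, and define for $x>0$ $$f(x)=\frac{\big(x^2(1-\tau)-qx+1\big)^2}{x^3},\qquad x_2=\frac{q+\sqrt{q^2-4(1-\tau)}}{2(1-\tau)}.$$ Let $\varepsilon,\varepsilon'>0$ satisfy $1+\varepsilon<1/\varepsilon'$. (i) If $q>2-\tau$ and $x_2<1+\varepsilon$, then $$\inf_{1+\varepsilon<x<1/\varepsilon'}f(x)=f(1+\varepsilon)=\frac{\big((1+\varepsilon)^2(1-\tau)-q(1+\varepsilon)+1\big)^2}{(1+\varepsilon)^3}.$$ (ii) If $q>2+\tau$ and $1/\varepsilon'<x_2$, then $$\inf_{1+\varepsilon<x<1/\varepsilon'}f(x)=f(1/\varepsilon')=\frac{1}{\varepsilon'}\big((1-\tau)-q\varepsilon'+(\varepsilon')^2\big)^2.$$ *)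

(* Defs.v *)
From HB Require Import structures.
From mathcomp Require Import all_boot all_order all_algebra.
From mathcomp Require Import all_classical all_reals.
Set Implicit Arguments. Unset Strict Implicit. Unset Printing Implicit Defensive.
Import Order.TTheory GRing.Theory Num.Theory.
Local Open Scope ring_scope.

Definition fL4 {R : realType} (tau q x : R) : R :=
  (x ^+ 2 * (1 - tau) - q * x + 1) ^+ 2 / x ^+ 3.

Definition x2L4 {R : realType} (tau q : R) : R :=
  (q + Num.sqrt (q ^+ 2 - 4 * (1 - tau))) / (2 * (1 - tau)).

(* Main.v *)
Require Import Defs.
From HB Require Import structures.
From mathcomp Require Import all_boot all_order all_algebra.
From mathcomp Require Import all_classical all_reals all_analysis.
From mathcomp Require Import ring lra.
Import Order.TTheory GRing.Theory Num.Theory.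
Import numFieldNormedType.Exports.
Local Open Scope classical_set_scope.
Local Open Scope ring_scope.

Lemma inf_eq_pt {R : realType} (F : R -> R) (A : set R) (c : R) :
  {for c, continuous F} ->
  (forall d, 0 < d -> exists y, A y /\ `|c - y| < d) ->
  (forall x, A x -> F c <= F x) -> inf (F @` A) = F c.
Proof.
move=> Fc Aw Fge.
have ne : F @` A !=set0.
  by have [y [Ay _]] := Aw 1 ltr01; exists (F y); exists y.
have lb : lbound (F @` A) (F c) by move=> _ [x Ax <-]; exact: Fge.
apply/eqP; rewrite eq_le lb_le_inf // andbT.
rewrite leNgt; apply/negP => H.
have e0 : 0 < inf (F @` A) - F c by rewrite subr_gt0.
have H2 : \forall t \near c, `|F c - F t| < inf (F @` A) - F c by apply: (cvgr_dist_lt F (F c) Fc).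
have [d /= d0 Hd] := (nbhs_ballP _ _).1 H2.
have [y [Ay cy]] := Aw d d0.
have := Hd y; rewrite -ball_normE /= => /(_ cy) Hy.
have : inf (F @` A) <= F y by apply: ge_inf; [exists (F c) | exists y].
move: Hy; rewrite ltr_norml; lra.
Qed.

Lemma fL4_cont {R : realType} (tau q c : R) : c != 0 -> {for c, continuous (fL4 tau q)}.
Proof.
move=> c0.
have -> : fL4 tau q = (fun x => ((x * x * (1 - tau) - q * x + 1) * (x * x * (1 - tau) - q * x + 1)) * (x * x * x)^-1).
  by apply: boolp.funext => x; rewrite /fL4 !exprS expr0 !mulr1 mulrA.
have Xc : {for c, continuous (fun x : R => x)} by exact: cvg_id.
have Kc : forall k : R, {for c, continuous (fun x : R => k)} by move=> k; exact: cvg_cst.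
have Gc : {for c, continuous (fun x : R => x * x * (1 - tau) - q * x + 1)}.
  apply: continuousD; last exact: Kc.
  apply: continuousD; last (apply: continuousN; apply: continuousM; [exact: Kc|exact: Xc]).
  apply: continuousM; last exact: Kc.
  by apply: continuousM.
apply: continuousM; first exact: continuousM.
apply: cvgV; first by rewrite !mulf_neq0.
by apply: cvgM; [apply: cvgM; exact: Xc|exact: Xc].
Qed.

Definition kk {R : realType} (a q u : R) := (a * u ^+ 4 - q * u ^+ 2 + 1) / u ^+ 3.

Lemma fL4_k {R : realType} (tau q x : R) : 0 < x ->
  fL4 tau q x = kk (1 - tau) q (Num.sqrt x) ^+ 2.
Proof.
move=> x0; have u0 : Num.sqrt x != 0 by rewrite gt_eqF // sqrtr_gt0.
rewrite /fL4 /kk -{1 2 3}(sqr_sqrtr (ltW x0)).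
by field.
Qed.

Lemma kk_diff {R : realType} (a q u s : R) : 0 < u -> 0 < s ->
  kk a q u - kk a q s =
  (u - s) * (a * (u * s) ^+ 3 + q * (u * s) ^+ 2 - (u ^+ 2 + u * s + s ^+ 2)) / (u * s) ^+ 3.
Proof.
move=> u0 s0; have u0' : u != 0 by rewrite gt_eqF.
have s0' : s != 0 by rewrite gt_eqF.
rewrite /kk; field.
by rewrite s0' u0'.

Qed.

Lemma mono_i {R : realType} (a q u s : R) : 0 < a -> 0 < q -> 0 < s -> s <= u ->
  3 <= s ^+ 2 * (a * s ^+ 2 + q) -> 0 <= kk a q s -> kk a q s ^+ 2 <= kk a q u ^+ 2.
Proof.
move=> a0 q0 s0 su h3 k0.
have u0 : 0 < u by apply: lt_le_trans su.
have p0 : 0 < u * s by rewrite mulr_gt0.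
have hp : s ^+ 2 <= u * s by rewrite expr2 ler_pM2r.
have h1 : a * s ^+ 2 + q <= a * (u * s) + q by rewrite lerD2r ler_pM2l.
have h2' : 3 <= s ^+ 2 * (a * (u * s) + q).
  by apply: (le_trans h3); rewrite ler_wpM2l // exprn_ge0 // ltW.
have h2 : 3 * u ^+ 2 <= (u * s) ^+ 2 * (a * (u * s) + q).
  have h2'' : 0 <= s ^+ 2 * (a * (u * s) + q) - 3 by rewrite subr_ge0.
  have := mulr_ge0 (exprn_ge0 2 (ltW u0)) h2''.
  rewrite exprMn; lra.
have h4 : u ^+ 2 + u * s + s ^+ 2 <= 3 * u ^+ 2 by nra.
have N0 : 0 <= a * (u * s) ^+ 3 + q * (u * s) ^+ 2 - (u ^+ 2 + u * s + s ^+ 2).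
  rewrite subr_ge0; apply: (le_trans h4); apply: (le_trans h2).
  by rewrite le_eqVlt; apply/orP; left; apply/eqP; ring.
have : 0 <= kk a q u - kk a q s.
  rewrite kk_diff //; apply: divr_ge0; last by rewrite exprn_ge0 // ltW.
  by apply: mulr_ge0 => //; rewrite subr_ge0.
rewrite subr_ge0 => hk.
rewrite -subr_ge0 subr_sqr; apply: mulr_ge0; first by rewrite subr_ge0.
by apply: addr_ge0 => //; apply: le_trans hk.
Qed.

Lemma mono_ii {R : realType} (a q u s : R) : 0 < a -> 0 < q -> 1 <= u -> u <= s ->
  3 <= a + q -> kk a q s <= 0 -> kk a q s ^+ 2 <= kk a q u ^+ 2.
Proof.
move=> a0 q0 u1 us h3 k0.
have u0 : 0 < u by apply: lt_le_trans u1.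
have s1 : 1 <= s by apply: le_trans us.
have s0 : 0 < s by apply: lt_le_trans s1.
have p1 : 1 <= u * s.
  have h : 0 <= u - 1 by rewrite subr_ge0.
  have := mulr_ge0 h (ltW s0); lra.
have p0 : 0 < u * s by lra.
have N0 : 0 <= a * (u * s) ^+ 3 + q * (u * s) ^+ 2 - (u ^+ 2 + u * s + s ^+ 2).
  have hs : 0 <= s - 1 by rewrite subr_ge0.
  have hu : 0 <= u - 1 by rewrite subr_ge0.
  have hp : 0 <= u * s - 1 by rewrite subr_ge0.
  have s2 : 0 <= s ^+ 2 - 1.
    have := mulr_ge0 hs (ltW s0); lra.
  have u2 : 0 <= u ^+ 2 - 1.
    have := mulr_ge0 hu (ltW u0); lra.
  have e1 : u ^+ 2 <= (u * s) ^+ 2.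
    have := mulr_ge0 (exprn_ge0 2 (ltW u0)) s2; rewrite exprMn; lra.
  have e2 : s ^+ 2 <= (u * s) ^+ 2.
    have := mulr_ge0 (exprn_ge0 2 (ltW s0)) u2; rewrite exprMn; lra.
  have e3 : u * s <= (u * s) ^+ 2.
    have := mulr_ge0 hp (ltW p0); rewrite expr2; lra.
  have e4 : 3 * (u * s) ^+ 2 <= (a * (u * s) + q) * (u * s) ^+ 2.
    rewrite ler_pM2r ?exprn_gt0 //.
    have := mulr_ge0 (ltW a0) hp; lra.
  have -> : a * (u * s) ^+ 3 + q * (u * s) ^+ 2 = (a * (u * s) + q) * (u * s) ^+ 2 by ring.
  lra.
have : kk a q u - kk a q s <= 0.
  rewrite kk_diff //; apply: mulr_le0_ge0; last by rewrite invr_ge0 exprn_ge0 // ltW.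
  by apply: mulr_le0_ge0 => //; rewrite subr_le0.
rewrite subr_le0 => hk.
rewrite -subr_ge0 subr_sqr; apply: mulr_le0; first by rewrite subr_le0.
by rewrite -oppr_ge0 opprD; apply: addr_ge0; rewrite oppr_ge0 //; apply: le_trans k0.
Qed.

Lemma witness {R : realType} (l r d : R) : l < r -> 0 < d -> exists w, 0 < w /\ w < d /\ w < r - l.
Proof.
move=> lr d0; case: (leP d (r - l)) => h.
  by exists (d / 2); lra.
by exists ((r - l) / 2); lra.
Qed.

Lemma x2_facts {R : realType} (a q y : R) : 0 < a -> a < 1 -> 1 + a < q ->
  y = (q + Num.sqrt (q ^+ 2 - 4 * a)) / (2 * a) ->
  q <= 2 * a * y /\ a * y ^+ 2 - q * y + 1 = 0 /\ 1 < y /\ 2 <= q * y.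
Proof.
move=> a0 a1 qa hy.
have D0 : 0 <= q ^+ 2 - 4 * a.
  have h : 0 <= (q - (1 + a)) * (q + (1 + a)) by apply: mulr_ge0; lra.
  have := sqr_ge0 (1 - a); lra.
set d := Num.sqrt _ in hy.
have dd : d ^+ 2 = q ^+ 2 - 4 * a by rewrite sqr_sqrtr.
have d0 : 0 <= d by exact: sqrtr_ge0.
have ey : 2 * a * y = q + d by rewrite hy; field; rewrite gt_eqF.
have gy : a * y ^+ 2 - q * y + 1 = 0.
  have : 4 * a * (a * y ^+ 2 - q * y + 1) = 0.
    have -> : 4 * a * (a * y ^+ 2 - q * y + 1) = (2 * a * y) ^+ 2 - 2 * q * (2 * a * y) + 4 * a by ring.
    rewrite ey; have -> : (q + d) ^+ 2 - 2 * q * (q + d) + 4 * a = d ^+ 2 - q ^+ 2 + 4 * a by ring.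
    by rewrite dd; ring.
  have h4 : 4 * a != 0 by rewrite gt_eqF // mulr_gt0.
  by move=> h; apply: (mulfI h4); rewrite h mulr0.
split; first lra.
split; first exact: gy.
split.
  have : 2 * a * 1 < 2 * a * y by rewrite ey; lra.
  by rewrite ltr_pM2l //; lra.
have h : 4 * a <= 2 * a * (q * y).
  have -> : 2 * a * (q * y) = q * (2 * a * y) by ring.
  rewrite ey; have := mulr_ge0 (ltW (lt_trans (ltr_pwDl ltr01 (ltW a0)) qa)) d0; lra.
have : 2 * a * 2 <= 2 * a * (q * y) by lra.
by rewrite ler_pM2l //; lra.
Qed.

Lemma kk_at {R : realType} (a q c : R) : 0 < c ->
  kk a q (Num.sqrt c) = (a * c ^+ 2 - q * c + 1) / (Num.sqrt c) ^+ 3.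
Proof.
move=> c0; have hs := sqr_sqrtr (ltW c0); set s := Num.sqrt c in hs *.
by rewrite /kk -hs; congr (_ / _); ring.
Qed.

Theorem lemma4p2 (R : realType) (tau q eps eps' : R)
  (htau0 : 0 < tau) (htau1 : tau < 1) (hq : 0 < q)
  (heps : 0 < eps) (heps' : 0 < eps') (hint : 1 + eps < eps'^-1) :
  ((2 - tau < q -> x2L4 tau q < 1 + eps ->
      inf [set fL4 tau q x | x in `](1 + eps), eps'^-1[] = fL4 tau q (1 + eps)
      /\ fL4 tau q (1 + eps) =
         ((1 + eps) ^+ 2 * (1 - tau) - q * (1 + eps) + 1) ^+ 2 / (1 + eps) ^+ 3)
  /\
  (2 + tau < q -> eps'^-1 < x2L4 tau q ->
      inf [set fL4 tau q x | x in `](1 + eps), eps'^-1[] = fL4 tau q eps'^-1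
      /\ fL4 tau q eps'^-1 = eps'^-1 * ((1 - tau) - q * eps' + eps' ^+ 2) ^+ 2)).
Proof.
have a0 : 0 < 1 - tau by rewrite subr_gt0.
have a1 : 1 - tau < 1 by lra.
have l0 : 0 < 1 + eps by lra.
have r0 : 0 < eps'^-1 by rewrite invr_gt0.
split.
  move=> hq2 hy.
  have [h1 [h2 [h3 h4]]] := @x2_facts R (1 - tau) q (x2L4 tau q) a0 a1 ltac:(lra) erefl.
  set y := x2L4 tau q in hy h1 h2 h3 h4.
  set c := 1 + eps in hy hint l0 *.
  set a := 1 - tau in a0 a1 h1 h2 h3 h4 *.
  have gc : 0 < a * c ^+ 2 - q * c + 1.
    have -> : a * c ^+ 2 - q * c + 1 = (c - y) * (a * (c + y) - q) + (a * y ^+ 2 - q * y + 1) by ring.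
    rewrite h2 addr0; apply: mulr_gt0; first lra.
    have : a * y < a * c by rewrite ltr_pM2l.
    lra.
  have c3 : 3 <= c * (a * c + q).
    have e1 : a * y ^+ 2 <= a * c ^+ 2.
      rewrite ler_pM2l // -subr_ge0 subr_sqr; apply: mulr_ge0; lra.
    have e2 : q * y <= q * c by rewrite ler_pM2l //; lra.
    lra.
  split=> //.
  apply: inf_eq_pt.
  - by apply: fL4_cont; rewrite gt_eqF.
  - move=> d d0; have [w [w0 [wd wr]]] := witness _ _ _ hint d0.
    exists (c + w); split.
      by rewrite /= in_itv /=; apply/andP; split; lra.
    by rewrite opprD addrA subrr add0r normrN gtr0_norm.
  - move=> x; rewrite /= in_itv /= => /andP [lx xr].
    have x0 : 0 < x by lra.
    rewrite !fL4_k //; apply: mono_i => //.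
    + by rewrite sqrtr_gt0.
    + by rewrite ler_sqrt //; lra.
    + by rewrite sqr_sqrtr ?(ltW l0) //; lra.
    + by rewrite kk_at //; apply: divr_ge0; [exact: ltW gc | rewrite exprn_ge0 // sqrtr_ge0].
move=> hq2 hy.
have [h1 [h2 [h3 h4]]] := @x2_facts R (1 - tau) q (x2L4 tau q) a0 a1 ltac:(lra) erefl.
set y := x2L4 tau q in hy h1 h2 h3 h4.
set c := eps'^-1 in hy hint r0 *.
set a := 1 - tau in a0 a1 h1 h2 h3 h4 *.
have c1 : 1 < c by lra.
have gc : a * c ^+ 2 - q * c + 1 < 0.
  have E : (y - 1) * (a * c ^+ 2 - q * c + 1) = (y - c) * (a - q + 1) + a * (c - 1) * (c - y) * (y - 1) + (c - 1) * (a * y ^+ 2 - q * y + 1) by ring.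
  rewrite h2 mulr0 addr0 in E.
  have n1 : (y - c) * (a - q + 1) < 0 by rewrite pmulr_rlt0; lra.
  have n2 : a * (c - 1) * (c - y) * (y - 1) < 0.
    rewrite pmulr_llt0; last lra.
    by rewrite pmulr_rlt0; [lra | apply: mulr_gt0; lra].
  have : (y - 1) * (a * c ^+ 2 - q * c + 1) < 0 by lra.
  by rewrite pmulr_rlt0 //; lra.
split; last first.
  by rewrite /fL4 /c /a; field; rewrite gt_eqF.
apply: inf_eq_pt.
- by apply: fL4_cont; rewrite gt_eqF.
- move=> d d0; have [w [w0 [wd wr]]] := witness _ _ _ hint d0.
  exists (c - w); split.
    by rewrite /= in_itv /=; apply/andP; split; lra.
  by rewrite opprB addrC addrNK gtr0_norm.
- move=> x; rewrite /= in_itv /= => /andP [lx xr].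
  have x0 : 0 < x by lra.
  rewrite !fL4_k //; apply: mono_ii => //.
  + by rewrite -sqrtr1 ler_sqrt //; lra.
  + by rewrite ler_sqrt //; lra.
  + lra.
  + rewrite kk_at //; apply: mulr_le0_ge0; first exact: ltW gc.
    by rewrite invr_ge0 exprn_ge0 // sqrtr_ge0.
Qed.
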